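(* Let $\Lambda$ be a lattice of rank $n$, $U=\Lambda\otimes\mathbb{R}$, and let $X\subset\Lambda$ be a basis of $U$. Then $$M_X(x,1)=\sum_{k=0}^n\Big(\sum_{A\subseteq X,\ |A|=n-k}h(A)\Big)x^k.$$
   Context: For a list $Y$, $\mathcal{Z}(Y)=\{\sum_{y\in Y}t_y y: 0\le t_y\le 1\}$; for $A\subseteq X$, $\mathcal{Z}(A)$ is a face of the parallelepiped $\mathcal{Z}(X)$. A point $p\in\Lambda\cap\mathcal{Z}(X)$ is internal to a face $F$ if $F$ is the smallest face of $\mathcal{Z}(X)$ containing $p$, and $h(A)$ is the number of points of $\Lambda$ internal to $\mathcal{Z}(A)$. For $A\subseteq X$: $r(A)=\dim_{\mathbb{R}}\langle A\rangle_{\mathbb{R}}$, $m(A)=[\Lambda\cap\langle A\rangle_{\mathbb{R}}:\langle A\rangle_{\mathbb{Z}}]$, and $M_X(x,y)=\sum_{A\subseteq X} m(A)(x-1)^{r(X)-r(A)}(y-1)^{|A|-r(A)}$. *)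

(* Defs.v *)
From HB Require Import structures.
From mathcomp Require Import all_boot all_order all_algebra.
From mathcomp Require Import reals.
From Stdlib Require Import ClassicalEpsilon.

Set Implicit Arguments.
Unset Strict Implicit.
Unset Printing Implicit Defensive.

Import Order.TTheory GRing.Theory Num.Theory.
Local Open Scope ring_scope.

Definition ncard {T : eqType} (S : T -> Prop) : nat :=
  epsilon (inhabits 0%N)
    (fun k => exists s : seq T, [/\ uniq s, size s = k & forall v, v \in s <-> S v]).

Section Defs.
(* Lattice Lambda = Z^n (integer row vectors), U = Lambda (x) R = R^n. *)
Variable R : realType.
Variable n : nat.
Variable X : 'I_n -> 'rV[int]_n.

Definition embed (v : 'rV[int]_n) : 'rV[R]_n := map_mx (fun z : int => z%:~R) v.

(* Sublists A of X are subsets of the index set. *)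
Definition rk (A : {set 'I_n}) : nat :=
  \rank (\matrix_(i < n) (if i \in A then embed (X i) else 0)).

Definition spanR (A : {set 'I_n}) (v : 'rV[int]_n) : Prop :=
  exists c : 'I_n -> R, embed v = \sum_(i in A) c i *: embed (X i).
Definition spanZ (A : {set 'I_n}) (v : 'rV[int]_n) : Prop :=
  exists c : 'I_n -> int, v = \sum_(i in A) c i *: X i.

(* k is the index [Lambda cap <A>_R : <A>_Z]: there are exactly k cosets *)
Definition is_index (A : {set 'I_n}) (k : nat) : Prop :=
  exists g : 'I_k -> 'rV[int]_n,
    [/\ forall i, spanR A (g i),
        forall i j, spanZ A (g i - g j) -> i = j
      & forall v, spanR A v -> exists i, spanZ A (v - g i)].

Definition mult (A : {set 'I_n}) : nat := epsilon (inhabits 0%N) (is_index A).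

Definition MX (x y : R) : R :=
  \sum_(A : {set 'I_n})
     (mult A)%:R * (x - 1) ^+ (rk setT - rk A)%N * (y - 1) ^+ (#|A| - rk A)%N.

Definition zono (A : {set 'I_n}) (p : 'rV[R]_n) : Prop :=
  exists t : 'I_n -> R, (forall i, 0 <= t i <= 1) /\
    p = \sum_(i in A) t i *: embed (X i).

Definition dotp (phi p : 'rV[R]_n) : R := (p *m phi^T) 0 0.

(* faces of the polytope Z(X) (exposed faces; phi = 0 gives Z(X) itself) *)
Definition face (F : 'rV[R]_n -> Prop) : Prop :=
  exists phi : 'rV[R]_n, forall p,
    F p <-> (zono setT p /\ forall q, zono setT q -> dotp phi q <= dotp phi p).

Definition internal (p : 'rV[R]_n) (F : 'rV[R]_n -> Prop) : Prop :=
  [/\ face F, F p & forall G, face G -> G p -> forall q, F q -> G q].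

Definition h (A : {set 'I_n}) : nat :=
  ncard (fun v : 'rV[int]_n => internal (embed v) (zono A)).

End Defs.

(* Main.v *)
Require Import Defs.
From HB Require Import structures.
From mathcomp Require Import all_boot all_order all_algebra.
From mathcomp Require Import reals.
From mathcomp Require Import zify ring lra.
From Stdlib Require Import ClassicalEpsilon.
Set Implicit Arguments.
Unset Strict Implicit.
Unset Printing Implicit Defensive.
Import Order.TTheory GRing.Theory Num.Theory.
Local Open Scope ring_scope.

Section S.
Variable R : realType.
Variable n : nat.
Variable X : 'I_n -> 'rV[int]_n.
Local Notation M := (\matrix_(i < n) embed R (X i)).
Hypothesis Mu : M \in unitmx.

Definition coord (p : 'rV[R]_n) : 'rV[R]_n := locked (p *m invmx M).
Lemma coordK t : coord (t *m M) = t. Proof. by rewrite /coord -lock mulmxK. Qed.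
Lemma coordE p : p = coord p *m M. Proof. by rewrite /coord -lock mulmxKV. Qed.
Lemma coord_inj p q : coord p = coord q -> p = q.
Proof. by move=> e; rewrite (coordE p) (coordE q) e. Qed.

Lemma sum_rowM (A : {set 'I_n}) (t : 'I_n -> R) :
  \sum_(i in A) t i *: embed R (X i) = (\row_i (if i \in A then t i else 0)) *m M.
Proof.
rewrite mulmx_sum_row big_mkcond /=; apply: eq_bigr => i _.
by rewrite mxE rowK; case: ifP; rewrite ?scale0r.
Qed.

Lemma zonoP A p : zono X A p <->
  forall i, if i \in A then 0 <= coord p 0 i <= 1 else coord p 0 i == 0.
Proof.
split.
  case=> t [t01 ->]; rewrite sum_rowM coordK => i; rewrite mxE.
  by case: (i \in A); rewrite ?eqxx.
move=> H; exists (fun i => if i \in A then coord p 0 i else 0); split.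
  by move=> i; move: (H i); case: ifP => // _ _; rewrite lexx ler01.
rewrite sum_rowM {1}(coordE p); congr (_ *m _); apply/rowP => i.
by rewrite [RHS]mxE; move: (H i); case: (i \in A) => // /eqP.
Qed.

Definition Sa (a : 'cV[R]_n) (c : 'rV[R]_n) := (c *m a) 0 0.

Lemma dotE phi p : dotp phi p = Sa (M *m phi^T) (coord p).
Proof. by rewrite /dotp /Sa {1}(coordE p) mulmxA. Qed.

Definition Fa (a : 'cV[R]_n) (p : 'rV[R]_n) : Prop :=
  zono X setT p /\ forall q, zono X setT q -> Sa a (coord q) <= Sa a (coord p).

Lemma faceP G : face X G <-> exists a, forall p, G p <-> Fa a p.
Proof.
split.
  case=> phi H; exists (M *m phi^T) => p; rewrite H /Fa.
  by split; case=> z h; split=> // q; rewrite -?dotE => /h; rewrite ?dotE.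
case=> a H; exists (invmx M *m a)^T => p; rewrite H /Fa.
have e : M *m (invmx M *m a)^T^T = a by rewrite trmxK mulKVmx.
by split; case=> z h; split=> // q; rewrite ?dotE ?e => /h; rewrite ?dotE ?e.
Qed.

Lemma SaD a c d : Sa a (c + d) = Sa a c + Sa a d.
Proof. by rewrite /Sa mulmxDl mxE. Qed.
Lemma SaN a c : Sa a (- c) = - Sa a c.
Proof. by rewrite /Sa mulNmx mxE. Qed.
Lemma SaZ a k c : Sa a (k *: c) = k * Sa a c.
Proof. by rewrite /Sa -scalemxAl mxE. Qed.
Lemma Sadelta a i : Sa a (delta_mx 0 i) = a i 0.
Proof. by rewrite /Sa -rowE mxE. Qed.
Lemma Sa_delta c i : Sa (delta_mx i 0) c = c 0 i.
Proof. by rewrite /Sa -colE mxE. Qed.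
Lemma Sa0 a : Sa a 0 = 0.
Proof. by rewrite /Sa mul0mx mxE. Qed.
Lemma coord0 : coord 0 = 0. Proof. by rewrite /coord -lock mul0mx. Qed.
Lemma SaE a c : Sa a c = \sum_j c 0 j * a j 0.
Proof. by rewrite /Sa mxE. Qed.
Lemma SaNa a c : Sa (- a) c = - Sa a c.
Proof. by rewrite /Sa mulmxN mxE. Qed.

Lemma zonoTP p : zono X setT p <-> forall i, 0 <= coord p 0 i <= 1.
Proof. by rewrite zonoP; split=> H i; move: (H i); rewrite in_setT. Qed.

Lemma zono_T A (p : 'rV[R]_n) : zono X A p -> zono X setT p.
Proof.
move/zonoP=> H; apply/zonoTP => i; move: (H i).
by case: (i \in A) => // /eqP ->; rewrite lexx ler01.
Qed.

Lemma zono0 A : zono X A (0 : 'rV[R]_n).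
Proof. by apply/zonoP => i; rewrite coord0 mxE; case: (i \in A); rewrite ?lexx ?ler01. Qed.

Definition intB (B : {set 'I_n}) (c : 'rV[R]_n) : bool :=
  [forall i, if i \in B then (0 < c 0 i) && (c 0 i < 1) else c 0 i == 0].

Lemma internalP B p : internal X p (zono X B) <-> intB B (coord p).
Proof.
split.
  case=> fB Bp Hmin; have Hp := (zonoP B p).1 Bp.
  have pT := zono_T Bp; move/zonoTP: (pT) => pT'.
  apply/forallP => i; have := Hp i; case: ifP => iB //; case/andP => c0 c1.
  rewrite !lt_neqAle c0 c1 !andbT; apply/andP; split.
    apply/eqP => e0.
    pose a : 'cV[R]_n := - delta_mx i 0.
    have fa : face X (Fa a) by apply/faceP; exists a.
    have Ga : Fa a p.
      split=> // q /zonoTP qT; rewrite !SaNa !Sa_delta -e0 oppr0 oppr_le0.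
      by case/andP: (qT i).
    have := Hmin _ fa Ga (delta_mx 0 i *m M).
    case.
      apply/zonoP => j; rewrite coordK mxE /=.
      case: ifP => jB; last by case: (j =P i) => [ji|_]; [rewrite ji iB in jB|].
      by case: (j == i); rewrite ?ler01 ?lexx.
    move=> _ /(_ 0 (zono0 _)); rewrite coord0 coordK Sa0 SaNa Sadelta mxE eqxx.
    by rewrite eqxx oppr_ge0 ler10.
  apply/eqP => e1.
  pose a : 'cV[R]_n := delta_mx i 0.
  have fa : face X (Fa a) by apply/faceP; exists a.
  have Ga : Fa a p.
    split=> // q /zonoTP qT; rewrite !Sa_delta e1.
    by case/andP: (qT i).
  have [_ /(_ p pT)] := Hmin _ fa Ga 0 (zono0 _).
  by rewrite coord0 Sa0 Sa_delta e1 ler10.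
move/forallP => H.
have Bp : zono X B p.
  apply/zonoP => i; move: (H i); case: (i \in B) => //.
  by case/andP => c0 c1; rewrite !ltW.
split => //.
  apply/faceP; exists (\col_i (if i \in B then 0 else -1)) => q; split.
    move=> Bq; split; first exact: zono_T Bq.
    move/zonoP: Bq => Bq r /zonoTP rT.
    rewrite [X in _ <= X]SaE big1; last first.
      by move=> j _; rewrite mxE; move: (Bq j); case: (j \in B) => [_|/eqP ->]; rewrite ?mulr0 ?mul0r.
    rewrite SaE sumr_le0 // => j _; rewrite mxE; case: (j \in B); first by rewrite mulr0.
    by rewrite mulrN1 oppr_le0; case/andP: (rT j).
  case=> qT h; apply/zonoP => j; move/zonoTP: (qT) => qT'.
  case: ifP => jB; first exact: qT'.
  have := h 0 (zono0 _); rewrite coord0 Sa0 SaE => hs.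
  pose f j := - (coord q 0 j * (\col_i (if i \in B then 0 else -1) : 'cV[R]_n) j 0).
  have f0 : forall j, true -> 0 <= f j.
    move=> k _; rewrite /f mxE; case: (k \in B); first by rewrite mulr0 oppr0.
    by rewrite mulrN1 opprK; case/andP: (qT' k).
  have : \sum_j f j == 0.
    rewrite eq_le sumr_ge0 // andbT /f sumrN oppr_le0 //.
  move=> /eqP /(psumr_eq0P f0) fz; have := fz j isT; rewrite /f mxE jB mulrN1 opprK => ->.
  by rewrite eqxx.
move=> G /faceP [a Ha] Gp q Bq; apply/Ha.
have [pT hp] := (Ha p).1 Gp.
move/zonoTP: (pT) => pT'.
have ai0 : forall i, i \in B -> a i 0 = 0.
  move=> i iB; have := H i; rewrite iB => /andP[c0 c1].
  apply/eqP; rewrite eq_le; apply/andP; split.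
    have r2T : zono X setT ((coord p + (1 - coord p 0 i) *: delta_mx 0 i) *m M).
      apply/zonoTP => j; rewrite coordK !mxE eqxx /=.
      case: (j =P i) => [->|_]; last by rewrite mulr0 addr0 pT'.
      by rewrite mulr1 addrC subrK ler01 lexx.
    have := hp _ r2T; rewrite coordK SaD SaZ Sadelta gerDl.
    by rewrite pmulr_rle0 // subr_gt0.
  have r1T : zono X setT ((coord p - coord p 0 i *: delta_mx 0 i) *m M).
    apply/zonoTP => j; rewrite coordK !mxE eqxx /=.
    case: (j =P i) => [->|_]; last by rewrite mulr0 subr0 pT'.
    by rewrite mulr1 subrr lexx ler01.
  have := hp _ r1T; rewrite coordK SaD SaN SaZ Sadelta gerDl oppr_le0.
  by rewrite pmulr_rge0.
have S0 : forall r, zono X B r -> Sa a (coord r) = 0.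
  move=> r /zonoP Br; rewrite SaE big1 // => j _; move: (Br j).
  by case: (boolP (j \in B)) => jB; [rewrite ai0 // mulr0 | move=> /eqP ->; rewrite mul0r].
split; first exact: zono_T Bq.
by move=> r rT; rewrite (S0 _ Bq) -(S0 _ Bp); apply: hp.
Qed.

Local Notation MA A := (\matrix_(i < n) (if i \in A then embed R (X i) else 0)).

Lemma rank_MA_le (A : {set 'I_n}) : (\rank (MA A) <= #|A|)%N.
Proof.
have -> : MA A = \sum_(i in A) (delta_mx i 0 *m embed R (X i)).
  apply/matrixP => r c; rewrite mxE summxE.
  under eq_bigr do rewrite mxE big_ord1 !mxE.
  rewrite big_mkcond (bigD1 r) //= big1 ?addr0 => [|i ir].
    case: (r \in A); rewrite ?mxE // eqxx /=. by rewrite mul1r.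
  by rewrite eq_sym (negbTE ir) /= mul0r if_same.
rewrite -sum1_card.
elim/big_rec2: _ => [|i k B _ hk]; first by rewrite mxrank0.
apply: leq_trans (mxrank_add _ _) _.
apply: leq_add => //; apply: leq_trans (mxrankM_maxl _ _) _.
by rewrite mxrank_delta.
Qed.

Lemma rkE A : rk R X A = #|A|.
Proof.
rewrite /rk.
have e : MA A + MA (~: A) = M.
  by apply/matrixP => r c; rewrite !mxE in_setC; case: (r \in A); rewrite /= !mxE ?addr0 ?add0r.
have hn : \rank M = n by rewrite mxrank_unit.
have h1 := mxrank_add (MA A) (MA (~: A)); rewrite e hn in h1.
have h2 := rank_MA_le A; have h3 := rank_MA_le (~: A).
have h4 := cardsC A; rewrite card_ord in h4.
lia.
Qed.

Lemma coordB p q : coord (p - q) = coord p - coord q.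
Proof. by rewrite /coord -!lock mulmxBl. Qed.

Lemma embedB (u v : 'rV[int]_n) : embed R (u - v) = embed R u - embed R v.
Proof. by apply/rowP => j; rewrite !mxE rmorphB. Qed.

Lemma embed_inj : injective (@embed R n).
Proof. by move=> u v /rowP e; apply/rowP => j; move: (e j); rewrite !mxE => /intr_inj. Qed.

Lemma embed_sum (A : {set 'I_n}) (z : 'I_n -> int) :
  embed R (\sum_(i in A) z i *: X i) = \sum_(i in A) (z i)%:~R *: embed R (X i).
Proof.
apply/rowP => j; rewrite !mxE !summxE rmorph_sum; apply: eq_bigr => i _.
by rewrite !mxE rmorphM.
Qed.

Definition cv (v : 'rV[int]_n) := coord (embed R v).

Lemma spanRP A v : spanR R X A v <-> forall i, i \notin A -> cv v 0 i = 0.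
Proof.
split.
  case=> t e i iA; rewrite /cv e sum_rowM coordK mxE.
  by rewrite (negbTE iA).
move=> H; exists (fun i => cv v 0 i); rewrite sum_rowM {1}(coordE (embed R v)).
congr (_ *m _); apply/rowP => i; rewrite [RHS]mxE.
by case: (boolP (i \in A)) => // /H.
Qed.

Lemma cv_spanZ (A : {set 'I_n}) (z : 'I_n -> int) :
  cv (\sum_(i in A) z i *: X i) = \row_i (if i \in A then (z i)%:~R else 0).
Proof. by rewrite /cv embed_sum sum_rowM coordK. Qed.

Lemma spanZB A u w : spanZ X A u -> spanZ X A w -> spanZ X A (u - w).
Proof.
case=> c -> [d ->]; exists (fun i => c i - d i).
by rewrite -sumrB; apply: eq_bigr => i _; rewrite scalerBl.
Qed.

Lemma spanZN A u : spanZ X A u -> spanZ X A (- u).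
Proof.
case=> c ->; exists (fun i => - c i).
by rewrite -sumrN; apply: eq_bigr => i _; rewrite scaleNr.
Qed.

Lemma is_index_le A k k' : is_index R X A k -> is_index R X A k' -> (k <= k')%N.
Proof.
case=> g [gR gd gc] [g' [g'R g'd g'c]].
have ex : forall i : 'I_k, exists j : 'I_k', spanZ X A (g i - g' j).
  by move=> i; apply: g'c.
pose f i := proj1_sig (constructive_indefinite_description _ (ex i)).
have fP i : spanZ X A (g i - g' (f i)).
  exact: (proj2_sig (constructive_indefinite_description _ (ex i))).
have finj : injective f.
  move=> i1 i2 e; apply: gd.
  by have := spanZB (fP i1) (fP i2); rewrite e opprB addrA subrK.
by have := leq_card _ finj; rewrite !card_ord.
Qed.

Lemma mult_eq A k : is_index R X A k -> mult R X A = k.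
Proof.
move=> hk; rewrite /mult.
have := epsilon_spec (inhabits 0%N) (is_index R X A) (ex_intro _ k hk).
by move=> he; apply/eqP; rewrite eqn_leq (is_index_le he hk) (is_index_le hk he).
Qed.

Lemma ncard_eq (T : eqType) (S : T -> Prop) (s : seq T) :
  uniq s -> (forall v, v \in s <-> S v) -> ncard S = size s.
Proof.
move=> us hs; rewrite /ncard.
have := epsilon_spec (inhabits 0%N)
  (fun k => exists s : seq T, [/\ uniq s, size s = k & forall v, v \in s <-> S v])
  (ex_intro _ (size s) (ex_intro _ s (And3 us erefl hs))).
case=> s' [us' <- hs']; apply: perm_size; apply: uniq_perm => // v.
by apply/idP/idP => H; [apply/hs; apply/hs' | apply/hs'; apply/hs].
Qed.

Definition K : nat := \sum_(i < n) \sum_(j < n) absz (X i ord0 j).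
Definition box : seq 'rV[int]_n :=
  map (fun f : {ffun 'I_n -> 'I_(K + K).+1} => \row_j ((nat_of_ord (f j))%:Z - K%:Z))
      (enum {ffun 'I_n -> 'I_(K + K).+1}).

Lemma box_uniq : uniq box.
Proof.
rewrite map_inj_uniq ?enum_uniq // => f g /rowP e; apply/ffunP => j.
have := e j; rewrite !mxE => h; apply: val_inj => /=; lia.
Qed.

Lemma in_box (v : 'rV[int]_n) : (forall j, (absz (v ord0 j) <= K)%N) -> v \in box.
Proof.
move=> H; apply/mapP; exists [ffun j => inord (absz (v ord0 j + K%:Z))]; first by rewrite mem_enum.
apply/rowP => j; have e0 : v 0 j = v ord0 j by [].
rewrite !mxE ffunE inordK; have := H j; move: (v ord0 j) => z.
all: lia.
Qed.

Lemma bound (v : 'rV[int]_n) : (forall i, 0 <= cv v 0 i <= 1) -> forall j, (absz (v ord0 j) <= K)%N.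
Proof.
move=> H j.
have e : (v 0 j)%:~R = \sum_i cv v 0 i * (X i 0 j)%:~R :> R.
  have := coordE (embed R v); move/rowP/(_ j).
  rewrite [in LHS]mxE => ->; rewrite mxE; apply: eq_bigr => i _; rewrite !mxE //. 
rewrite -(ler_nat R) natr_absz intr_norm e.
apply: le_trans (ler_norm_sum _ _ _) _.
rewrite /K natr_sum; apply: ler_sum => i _.
rewrite natr_sum (bigD1 j) //= normrM.
apply: le_trans (_ : _ <= (absz (X i ord0 j))%:R) _; last first.
  by rewrite lerDl sumr_ge0.
rewrite natr_absz intr_norm; have /andP[c0 c1] := H i.
by rewrite ger0_norm // ler_piMl.
Qed.

Definition PA (A : {set 'I_n}) (c : 'rV[R]_n) : bool :=
  [forall i, if i \in A then (0 <= c 0 i) && (c 0 i < 1) else c 0 i == 0].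

Definition sA A := filter (fun v => PA A (cv v)) box.
Definition sB B := filter (fun v => intB B (cv v)) box.

Lemma PA_box A v : PA A (cv v) -> v \in box.
Proof.
move/forallP => H; apply/in_box/bound => i; move: (H i).
by case: (i \in A) => [/andP[-> /ltW ->]|/eqP ->] //; rewrite lexx ler01.
Qed.

Lemma intB_box B v : intB B (cv v) -> v \in box.
Proof.
move/forallP => H; apply/in_box/bound => i; move: (H i).
by case: (i \in B) => [/andP[/ltW -> /ltW ->]|/eqP ->] //; rewrite lexx ler01.
Qed.

Lemma is_index_PA A : is_index R X A (size (sA A)).
Proof.
set s := sA A; have us : uniq s := filter_uniq _ box_uniq.
have Ps : forall i : 'I_(size s), PA A (cv (nth 0 s i)).
  move=> i; have : nth 0 s i \in s := mem_nth 0 (ltn_ord i).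
  by rewrite mem_filter => /andP[].
exists (fun i : 'I_(size s) => nth 0 s i); split.
- move=> i; apply/spanRP => l lA; move/forallP: (Ps i) => /(_ l).
  by rewrite (negbTE lA) => /eqP.
- move=> i j [z ez].
  have := congr1 cv ez; rewrite cv_spanZ /cv embedB coordB => e.
  have ecv : cv (nth 0 s i) = cv (nth 0 s j).
    apply/rowP => l; move/rowP/(_ l): e; rewrite !mxE.
    move/forallP: (Ps i) => /(_ l); move/forallP: (Ps j) => /(_ l).
    case: (l \in A) => [/andP[a1 a2] /andP[b1 b2] | /eqP -> /eqP ->] //.
    rewrite -/(cv _) -/(cv _) => e.
    have h1 : (z l)%:~R < 1 :> R by rewrite -e; lra.
    have h2 : (-1 : int)%:~R < (z l)%:~R :> R by rewrite rmorphN1 -e; lra.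
    rewrite ltrz1 in h1; rewrite ltr_int in h2.
    have z0 : z l = 0 by lia.
    by move/eqP: e; rewrite z0 rmorph0 subr_eq add0r => /eqP.
  move/coord_inj/embed_inj: ecv => /eqP; rewrite nth_uniq // => /eqP.
  exact: val_inj.
- move=> v /spanRP Hv.
  pose z l := Num.floor (cv v 0 l).
  pose w := v - \sum_(l in A) z l *: X l.
  have cw : cv w = cv v - \row_l (if l \in A then (z l)%:~R else 0).
    by rewrite -cv_spanZ /cv embedB coordB.
  have Pw : PA A (cv w).
    apply/forallP => l; rewrite cw !mxE; case: (boolP (l \in A)) => lA.
      have := floorD1_gt (cv v 0 l); have := floor_le (cv v 0 l).
      rewrite /z intrD => ha hb; apply/andP; split; lra.
    by rewrite (Hv _ lA) subr0.
  have ws : w \in s by rewrite mem_filter Pw (PA_box Pw).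
  have iw : (index w s < size s)%N by rewrite index_mem.
  exists (Ordinal iw); rewrite /= nth_index //; exists z.
  by rewrite /w opprB addrC subrK.
Qed.

Lemma multE A : mult R X A = size (sA A).
Proof. exact/mult_eq/is_index_PA. Qed.

Lemma hE B : h R X B = size (sB B).
Proof.
rewrite /h; apply: ncard_eq; first exact: filter_uniq box_uniq.
move=> v; rewrite mem_filter internalP; split; first by case/andP.
by move=> hv; rewrite hv (intB_box hv).
Qed.

Lemma countE (T : Type) (p : pred T) (s : seq T) : count p s = \sum_(x <- s) (p x : nat).
Proof. by rewrite -sum1_count big_mkcond; apply: eq_bigr => x _; case: (p x). Qed.

Lemma pointwise A (c : 'rV[R]_n) :
  (PA A c : nat) = \sum_(B : {set 'I_n} | B \subset A) (intB B c : nat).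
Proof.
set S := [set i | c 0 i != 0].
have hB : forall B, intB B c -> B = S.
  move=> B /forallP H; apply/setP => i; rewrite inE; move: (H i).
  by case: (i \in B) => [/andP[h _]|/eqP ->]; [rewrite (gt_eqF h) | rewrite eqxx].
case: (boolP (PA A c)) => PAc.
  have SA : S \subset A.
    apply/subsetP => i; rewrite inE; move/forallP: PAc => /(_ i).
    by case: (i \in A) => // /eqP ->; rewrite eqxx.
  rewrite (bigD1 S) //=.
  have -> : intB S c.
    apply/forallP => i; rewrite inE; move/forallP: PAc => /(_ i).
    case: (i \in A) => [/andP[c0 c1] | /eqP ->]; last by rewrite eqxx.
    by case: (c 0 i =P 0) => [->|/eqP nz] /=; rewrite ?eqxx // lt0r nz c0 c1.
  rewrite big1 ?addn0 // => B /andP[_ BS].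
  by case: (boolP (intB B c)) => // /hB eB; rewrite eB eqxx in BS.
rewrite big1 // => B BA; case: (boolP (intB B c)) => // hc; exfalso.
move/negP: PAc; apply; apply/forallP => i; move/forallP: hc => /(_ i).
have := subsetP BA i; case: (i \in B) => [/(_ isT) -> /andP[c0 c1]|_ /eqP ->].
  by rewrite ltW.
by case: (i \in A); rewrite ?lexx ?ltr01 ?eqxx.
Qed.

Lemma mult_h A : mult R X A = \sum_(B : {set 'I_n} | B \subset A) h R X B.
Proof.
rewrite multE; under eq_bigr do rewrite hE.
rewrite /sA /sB size_filter countE.
under [RHS]eq_bigr do rewrite size_filter countE.
rewrite exchange_big /=; apply: eq_bigr => v _; exact: pointwise.
Qed.

Lemma binom_sub (x : R) (B : {set 'I_n}) :
  \sum_(A : {set 'I_n} | B \subset A) (x - 1) ^+ (n - #|A|) = x ^+ (n - #|B|).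
Proof.
have := @bigA_distr R 0 1 *%R +%R 'I_n (fun=> 1) (fun i => if i \in B then 0 else x - 1).
have -> : \prod_i (1 + (if i \in B then 0 else x - 1)) = x ^+ (n - #|B|).
  rewrite (eq_bigr (fun i => if i \in ~: B then x else 1)); last first.
    by move=> i _; rewrite in_setC; case: (i \in B); rewrite ?addr0 // addrC subrK.
  rewrite -big_mkcond prodr_const; congr (_ ^+ _).
  by have := cardsC B; rewrite card_ord; lia.
move=> ->; rewrite [LHS]big_mkcond /=; apply: eq_bigr => A _.
case: (boolP (B \subset A)) => BA.
  rewrite (eq_bigr (fun i => if i \in ~: A then x - 1 else 1)); last first.
    move=> i _; rewrite in_setC; case: (boolP (i \in A)) => // iA.
    by rewrite (negbTE (contra (subsetP BA i) iA)).
  rewrite -big_mkcond prodr_const; congr (_ ^+ _).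
  have e := cardsC A; rewrite card_ord in e; apply/eqP; rewrite -(eqn_add2l #|A|) subnKC ?e //.
  by apply: leq_trans (max_card _) _; rewrite card_ord.
have [i iB iA] : exists2 i, i \in B & i \notin A.
  by move/subsetPn: BA => [i ? ?]; exists i.
by rewrite (bigD1 i) //= (negbTE iA) iB mul0r.
Qed.
End S.

Theorem lemma4p4 (R : realType) (n : nat) (X : 'I_n -> 'rV[int]_n)
  (hbasis : row_free (\matrix_(i < n) embed R (X i)) /\
            row_full (\matrix_(i < n) embed R (X i)))
  (x : R) :
  @MX R n X x 1 =
  \sum_(k < n.+1) (\sum_(A : {set 'I_n} | #|A| == (n - k)%N) @h R n X A)%:R * x ^+ k.
Proof.
have Mu : (\matrix_(i < n) embed R (X i)) \in unitmx by rewrite -row_free_unit; case: hbasis.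
rewrite /MX.
under eq_bigr => A _ do rewrite !(rkE Mu) cardsT card_ord subnn subrr expr0 mulr1 (mult_h Mu) natr_sum mulr_suml.
rewrite (exchange_big_dep xpredT) //=.
under eq_bigr => B _ do rewrite -mulr_sumr (binom_sub Mu).
under [RHS]eq_bigr => k _ do rewrite natr_sum mulr_suml.
rewrite [RHS](exchange_big_dep xpredT) //=; apply: eq_bigr => B _.
have hB : (#|B| <= n)%N by rewrite -[X in (_ <= X)%N](card_ord n) max_card.
have hi : (n - #|B| < n.+1)%N by rewrite ltnS leq_subr.
rewrite (bigD1 (inord (n - #|B|))) /=; last by rewrite inordK // subKn.
rewrite inordK //.
rewrite big1 ?addr0 // => k /andP[/eqP e kne]; exfalso; move: kne.
rewrite -val_eqE /= inordK // e subKn ?eqxx //.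
by rewrite -ltnS ltn_ord.
Qed.
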